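(* For every $n\ge2$, $$|\mathcal{B}_n(321)|=C(n)-C(n-1)=\frac{3}{n+1}\binom{2n-2}{n-2},$$ where $C(m)=\frac{1}{m+1}\binom{2m}{m}$ is the $m$-th Catalan number.
   Context: A ballot permutation is a $\pi\in\mathfrak{S}_n$ such that every prefix $\pi_1\cdots\pi_i$ has at most as many descents ($\pi_j>\pi_{j+1}$) as ascents ($\pi_j<\pi_{j+1}$); $\mathcal{B}_n$ denotes the set of them. A permutation avoids the pattern $\sigma\in\mathfrak{S}_k$ if it has no subsequence order-isomorphic to $\sigma$; $\mathcal{B}_n(\sigma)$ is the set of $\sigma$-avoiding elements of $\mathcal{B}_n$. *)

(* Defs.v *)
From mathcomp Require Import all_boot all_order all_algebra all_fingroup.
Set Implicit Arguments. Unset Strict Implicit. Unset Printing Implicit Defensive.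

(* Permutations of {0,...,n-1} as 'S_n; pi_1 ... pi_n is s 0, ..., s (n-1).
   Positions/values are 0-indexed, which does not affect descents, ascents
   or pattern containment. *)

(* number of descents (resp. ascents) among adjacent pairs (j, j+1) with j+1 < i,
   i.e. within the prefix pi_1 ... pi_i *)
Definition ndes_prefix n (s : 'S_n) (i : nat) : nat :=
  #|[set j : 'I_n | (j.+1 < i) && [exists k : 'I_n, (val k == j.+1) && (s k < s j)]]|.
Definition nasc_prefix n (s : 'S_n) (i : nat) : nat :=
  #|[set j : 'I_n | (j.+1 < i) && [exists k : 'I_n, (val k == j.+1) && (s j < s k)]]|.

Definition ballot n (s : 'S_n) : bool :=
  [forall i : 'I_n.+1, ndes_prefix s i <= nasc_prefix s i].

Definition contains321 n (s : 'S_n) : bool :=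
  [exists i : 'I_n, exists j : 'I_n, exists k : 'I_n,
     [&& i < j, j < k, s j < s i & s k < s j]].

Definition B321 n : {set 'S_n} := [set s : 'S_n | ballot s && ~~ contains321 s].

Definition catalan (m : nat) : rat := ('C(m.*2, m))%:R / (m.+1)%:R.

(* Main.v *)
Require Import Defs.
From mathcomp Require Import all_boot all_order all_algebra all_fingroup.
From mathcomp Require Import zify ring lra.
Set Implicit Arguments. Unset Strict Implicit. Unset Printing Implicit Defensive.

Fixpoint nib (x : nat) (l : seq nat) : bool :=
  if l is y :: l' then ((x <= y) || all (leq y) l') && nib x l' else true.
Fixpoint av (l : seq nat) : bool :=
  if l is x :: l' then nib x l' && av l' else true.

Fixpoint inc (l : seq nat) : bool :=
  if l is y :: l' then all (leq y) l' && inc l' else true.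
Fixpoint lis (l : seq nat) : nat :=
  if l is x :: l' then (if inc l then (size l').+1 else lis l') else 0.
Definition ins (v p : nat) (s : seq nat) := take p s ++ v :: drop p s.

Lemma inc_drop l p : inc l -> inc (drop p l).
Proof.
elim: l p => [|y l IH] [|p] //= /andP [_ H].
by apply: IH.
Qed.

Lemma inc_catr a b : inc (a ++ b) -> inc b.
Proof. by elim: a => [|y a IH] //= /andP [_ /IH]. Qed.

Lemma lis_le l : lis l <= size l.
Proof.
elim: l => [|y l IH] //=; case: ifP => // _; exact: leqW.
Qed.

Lemma inc_lis l p : inc (drop p l) = (size l - p <= lis l).
Proof.
elim: l p => [|y l IH] [|p] //=.
- case: ifP => H; first by rewrite subn0 leqnn.
  rewrite subn0; apply/esym/negbTE; rewrite -ltnNge ltnS; exact: lis_le.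
- rewrite subSS IH; case: ifP => // /andP [_ H].
  by rewrite -IH (inc_drop p H); apply/esym; lia.
Qed.

Lemma lis_unique l k : k <= size l ->
  (forall p, inc (drop p l) = (size l - p <= k)) -> lis l = k.
Proof.
move=> Hk H; apply/eqP; rewrite eqn_leq; apply/andP; split.
- have := H (size l - lis l); rewrite inc_lis subKn ?lis_le // leqnn.
  by move=> /esym.
- have := H (size l - k); rewrite inc_lis subKn // leqnn.
  by move=> ->.
Qed.

Lemma nib_inc v l : all (fun y => y < v) l -> nib v l = inc l.
Proof.
elim: l => [|y l IH] //= /andP [Hy Hl].
by rewrite IH // leqNgt Hy.
Qed.

Lemma nib_ins x v a b : x < v -> nib x (a ++ v :: b) = nib x (a ++ b).
Proof.
move=> Hxv; elim: a => [|y a IH] /=.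
  by rewrite ltnW.
rewrite IH !all_cat /=.
case: (leqP x y) => //= Hyx.
have -> : y <= v by apply: leq_trans (ltnW Hyx) (ltnW Hxv).
by [].
Qed.

Lemma av_ins v p s : all (fun y => y < v) s ->
  av (ins v p s) = nib v (drop p s) && av s.
Proof.
rewrite /ins; elim: s p => [|x s IH] [|p] //= /andP [Hx Hs].
rewrite nib_ins // cat_take_drop IH //.
by rewrite andbCA.
Qed.

Lemma inc_rcons l v : all (fun y => y <= v) l -> inc (l ++ [:: v]) = inc l.
Proof.
elim: l => [|y l IH] //= /andP [Hy Hl].
by rewrite IH // all_cat /= Hy !andbT.
Qed.

Lemma all_drop (a : pred nat) p s : all a s -> all a (drop p s).
Proof. by move=> /allP H; apply/allP => x /mem_drop /H. Qed.

Lemma lis_ins s v m : all (fun y => y < v) s -> m <= lis s ->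
  lis (ins v (size s - m) s) = if m == 0 then (lis s).+1 else m.
Proof.
move=> Hs Hm; have Hls := lis_le s.
have Hsz : size (ins v (size s - m) s) = (size s).+1.
  by rewrite /ins size_cat /= size_take size_drop; case: ltnP => ?; lia.
case: eqP => [-> | /eqP Hm0].
- have E : ins v (size s - 0) s = s ++ [:: v].
    by rewrite /ins subn0 take_size drop_size.
  rewrite E; apply: lis_unique; first by rewrite size_cat /=; lia.
  move=> q; rewrite drop_cat size_cat /=.
  case: ltnP => Hq.
  + rewrite inc_rcons; last first.
      by apply: all_drop; apply/allP => y /(allP Hs) /ltnW.
    by rewrite inc_lis; lia.
  + case: (q - size s) => [|d] /=; lia.
- apply: lis_unique; first by rewrite Hsz; lia.
  have Hp : size s - m < size s by lia.
  have Hdp := drop_nth 0 Hp.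
  have Hnth : nth 0 s (size s - m) < v by apply: (all_nthP 0 Hs).
  have Hincp : inc (drop (size s - m) s) by rewrite inc_lis; lia.
  move=> q; rewrite Hsz /ins drop_cat size_takel ?leq_subr //.
  case: ltnP => Hq.
  + have -> : ((size s).+1 - q <= m) = false by apply/negbTE; rewrite -ltnNge; lia.
    by apply/negbTE/negP => /inc_catr; rewrite Hdp /= leqNgt Hnth.
  + case E: (q - (size s - m)) => [|d] /=.
    * rewrite Hdp /= leqNgt Hnth /=; apply/esym/negbTE; lia.
    * rewrite inc_drop //; apply/esym; lia.
Qed.

Fixpoint g (k r : nat) : nat :=
  if k is k'.+1 then \sum_(i < r.+1) g k' (if i == r :> nat then r.+1 else r - i)
  else 1.

Definition children (s : seq nat) : seq (seq nat) :=
  [seq ins (size s) p s | p <- iota (size s - lis s) (lis s).+1].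
Definition step (Ls : seq (seq nat)) := flatten (map children Ls).
Definition gen n := iter n step [:: [::]].

Lemma size_ins v p s : size (ins v p s) = (size s).+1.
Proof. by rewrite /ins size_cat /= size_take size_drop; case: ltnP => ?; lia. Qed.

Lemma children_sum k s : all (fun y => y < size s) s ->
  \sum_(t <- children s) g k (lis t) = g k.+1 (lis s).
Proof.
move=> Hs; rewrite /children big_map.
have Hl := lis_le s.
rewrite -{1}(addn0 (size s - lis s)) iotaDl big_map.
have -> : iota 0 (lis s).+1 = index_iota 0 (lis s).+1 by rewrite /index_iota subn0.
rewrite big_mkord.
apply: eq_bigr => i _.
have Hi : i <= lis s by rewrite -ltnS.
have -> : size s - lis s + i = size s - (lis s - i) by lia.
rewrite lis_ins ?leq_subr //.
have -> : (lis s - i == 0) = (i == lis s :> nat) by apply/eqP/eqP; lia.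
by [].
Qed.

Lemma all_ins v p s (a : pred nat) : all a s -> a v -> all a (ins v p s).
Proof.
move=> /allP H Hv; apply/allP => x; rewrite /ins mem_cat in_cons.
by case/or3P => [/mem_take/H | /eqP -> | /mem_drop/H].
Qed.

Definition inv (Ls : seq (seq nat)) := all (fun s => all (fun y => y < size s) s) Ls.

Lemma inv_step Ls : inv Ls -> inv (step Ls).
Proof.
move=> /allP H; apply/allP => t /flatten_mapP [s /H Hs /mapP [p _ ->]].
rewrite size_ins; apply: all_ins => //.
by apply/allP => y /(allP Hs) /ltnW.
Qed.

Lemma size_iter k Ls : inv Ls -> size (iter k step Ls) = \sum_(s <- Ls) g k (lis s).
Proof.
elim: k Ls => [|k IH] Ls HL.
  by rewrite /= sum1_size.
rewrite iterSr IH ?inv_step // /step big_flatten big_map /=.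
apply: eq_big_seq => s Hs; apply: children_sum.
exact: (allP HL).
Qed.

Lemma size_gen n : size (gen n) = g n 0.
Proof. by rewrite /gen size_iter // big_seq1. Qed.

Lemma perm_iota_all s n : perm_eq s (iota 0 n) -> all (fun y => y < n) s.
Proof. by move=> /perm_mem H; apply/allP => y; rewrite H mem_iota. Qed.

Lemma perm_ins v p s : perm_eq (ins v p s) (v :: s).
Proof. by rewrite /ins -cat1s perm_catCA cat_take_drop cat1s. Qed.

Lemma perm_ins_iota s n p : perm_eq s (iota 0 n) -> perm_eq (ins n p s) (iota 0 n.+1).
Proof.
move=> H; rewrite /ins -cat1s perm_catCA cat_take_drop cat1s.
have -> : iota 0 n.+1 = iota 0 n ++ [:: n] by rewrite -addn1 iotaD.
by rewrite cats1 perm_sym perm_rcons perm_sym perm_cons.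
Qed.

Lemma mem_gen n t : (t \in gen n) = perm_eq t (iota 0 n) && av t.
Proof.
elim: n t => [|n IH] t.
  rewrite /gen /= inE; case: t => [|x t] //=.
  by apply/esym/negbTE; apply/negP => /andP [/perm_size].
rewrite /gen iterS -/(gen n) /step.
apply/flatten_mapP/andP.
- move=> [s]; rewrite IH => /andP [Hp Ha] /mapP [p].
  have Hsz : size s = n by rewrite (perm_size Hp) size_iota.
  have Hall := perm_iota_all Hp.
  rewrite mem_iota => /andP [H1 H2] ->.
  rewrite Hsz; split; first exact: perm_ins_iota.
  rewrite av_ins // Ha andbT nib_inc; last by apply: all_drop.
  by rewrite inc_lis; lia.
- move=> [Hp Ha].
  have Hn : n \in t by rewrite (perm_mem Hp) mem_iota; lia.
  move: Hp Ha; case/splitPr: Hn => p1 p2 Hp Ha.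
  set s := p1 ++ p2.
  have Et : p1 ++ n :: p2 = ins n (size p1) s.
    by rewrite /ins /s take_size_cat // drop_size_cat.
  rewrite Et in Hp Ha *.
  have Hps : perm_eq s (iota 0 n).
    move: Hp.
    have -> : iota 0 n.+1 = iota 0 n ++ [:: n] by rewrite -addn1 iotaD.
    rewrite (permPl (perm_ins _ _ _)).
    by rewrite cats1 perm_sym perm_rcons perm_sym perm_cons.
  have Hall := perm_iota_all Hps.
  have Hsz : size s = n by rewrite (perm_size Hps) size_iota.
  move: Ha; rewrite av_ins // nib_inc ?all_drop // inc_lis => /andP [Hi Has].
  exists s; first by rewrite IH Hps Has.
  apply/mapP; exists (size p1); last by rewrite Hsz.
  have Hs1 : @size nat s = size p1 + size p2 by rewrite /s size_cat.
  rewrite mem_iota; have := lis_le s; clearbody s; lia.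
Qed.

Lemma uniq_flatten_map (T U : eqType) (f : T -> seq U) s :
  uniq s -> (forall x, x \in s -> uniq (f x)) ->
  (forall x y z, x \in s -> y \in s -> z \in f x -> z \in f y -> x = y) ->
  uniq (flatten (map f s)).
Proof.
elim: s => [|x s IH] //= /andP [Hx Hs] Hu Hd.
rewrite cat_uniq Hu ?mem_head //= IH //; last first.
- by move=> a b z Ha Hb; apply: Hd; rewrite inE ?Ha ?Hb orbT.
- by move=> y Hy; apply: Hu; rewrite inE Hy orbT.
rewrite andbT; apply/hasPn => z /flatten_mapP [y Hy Hz]; apply/negP => Hzx.
have E : x = y by apply: (Hd x y z) => //; rewrite inE ?eqxx ?Hy ?orbT.
by move: Hx; rewrite E Hy.
Qed.

Lemma index_ins v p s : v \notin s -> p <= size s -> index v (ins v p s) = p.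
Proof.
move=> Hv Hp; rewrite /ins index_cat.
have -> : (v \in take p s) = false.
  by apply/negbTE; apply: contra Hv => /mem_take.
by rewrite /= eqxx addn0 size_takel.
Qed.

Lemma ins_inv v p s : p <= size s -> take p (ins v p s) ++ drop p.+1 (ins v p s) = s.
Proof.
move=> Hp; have Hs : size (take p s) = p by rewrite size_takel.
rewrite /ins take_size_cat // drop_cat Hs ltnNge leqnSn /= subSnn /=.
by rewrite drop0 cat_take_drop.
Qed.

Lemma le_aux p S L : p < S - L + L.+1 -> L <= S -> p <= S.
Proof. lia. Qed.

Lemma uniq_gen n : uniq (gen n).
Proof.
elim: n => [|n IH] //.
rewrite /gen iterS -/(gen n) /step.
have Hn : forall s, s \in gen n -> size s = n /\ n \notin s.
  move=> s; rewrite mem_gen => /andP [Hp _].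
  by rewrite (perm_size Hp) size_iota (perm_mem Hp) mem_iota ltnn.
apply: uniq_flatten_map => //.
- move=> s /Hn [Hsz Hns]; rewrite /children map_inj_in_uniq ?iota_uniq //.
  move=> p q; rewrite !mem_iota => /andP [_ Hp] /andP [_ Hq] E.
  have Hl := lis_le s.
  rewrite Hsz in E.
  rewrite -(index_ins (p:=p) Hns); last exact: le_aux Hp Hl.
  by rewrite E index_ins //; exact: le_aux Hq Hl.
- move=> s s' z /Hn [Hsz Hns] /Hn [Hsz' Hns'] /mapP [p Hp ->] /mapP [q Hq Ez].
  move: Hp Hq; rewrite !mem_iota => /andP [_ Hp] /andP [_ Hq].
  have Hl := lis_le s; have Hl' := lis_le s'.
  have Epq : p = q.
    rewrite Hsz Hsz' in Ez.
    rewrite -(index_ins (p:=p) Hns); last exact: le_aux Hp Hl.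
    by rewrite Ez index_ins //; exact: le_aux Hq Hl'.
  rewrite -(ins_inv (size s) (p:=p) (s:=s)); last exact: le_aux Hp Hl.
  rewrite Ez Epq ins_inv //; exact: le_aux Hq Hl'.
Qed.
Definition inibP x l : Prop :=
  exists j k, [/\ j < k, k < size l, nth 0 l j < x & nth 0 l k < nth 0 l j].

Definition c321P (l : seq nat) : Prop :=
  exists i j k, [/\ i < j, j < k, k < size l, nth 0 l j < nth 0 l i & nth 0 l k < nth 0 l j].

Lemma nibP1 x l : inibP x l -> nib x l = false.
Proof.
elim: l => [|y l IH] /=; first by move=> [j [k [_ ]]]; rewrite ltn0.
move=> [[|j] [[|k] [a b c d]]] //=.
- have -> : (x <= y) = false by apply/negbTE; rewrite -ltnNge.
  have -> : all (leq y) l = false.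
    apply/negbTE/negP => /(all_nthP 0) H.
    by have := H k b; rewrite leqNgt d.
  by [].
- by rewrite IH ?andbF //; exists j, k.
Qed.

Lemma nibP2 x l : nib x l = false -> inibP x l.
Proof.
elim: l => [|y l IH] //=.
case H1: (nib x l); last first.
  by move=> _; have [j [k [a b c d]]] := IH H1; exists j.+1, k.+1.
rewrite andbT => /norP [Hxy].
rewrite -has_predC => /hasP [z zl /= Hz].
exists 0, (index z l).+1; split => //=.
- by rewrite ltnS index_mem.
- by rewrite ltnNge.
- by rewrite nth_index // ltnNge.
Qed.

Lemma avP1 l : c321P l -> av l = false.
Proof.
elim: l => [|y l IH] /=; first by move=> [i [j [k [_ _ ]]]]; rewrite ltn0.
move=> [[|i] [[|j] [[|k] [a b c d e]]]] //=.
- by rewrite nibP1 //; exists j, k.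
- by rewrite IH ?andbF //; exists i, j, k.
Qed.

Lemma avP2 l : av l = false -> c321P l.
Proof.
elim: l => [|y l IH] //=.
case H1: (av l); last first.
  by move=> _; have [i [j [k [a b c d e]]]] := IH H1; exists i.+1, j.+1, k.+1.
rewrite andbT => /nibP2 [j [k [a b c d]]].
by exists 0, j.+1, k.+1.
Qed.

Definition ls n (s : 'S_n) : seq nat := [seq val (s i) | i <- enum 'I_n].

Lemma size_ls n (s : 'S_n) : size (ls s) = n.
Proof. by rewrite size_map size_enum_ord. Qed.

Lemma nth_ls n (s : 'S_n) (i : 'I_n) : nth 0 (ls s) i = s i.
Proof. by rewrite /ls (nth_map i) ?size_enum_ord // nth_ord_enum. Qed.

Lemma ls_perm n (s : 'S_n) : perm_eq (ls s) (iota 0 n).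
Proof.
apply: uniq_perm; last 1 first.
- move=> x; rewrite mem_iota /=; apply/mapP/idP.
    by move=> [i _ ->]; rewrite ltn_ord.
  move=> Hx; exists (s^-1 (Ordinal Hx))%g; first by rewrite mem_enum.
  by rewrite permKV.
- rewrite map_inj_uniq ?enum_uniq // => i j /val_inj; exact: perm_inj.
- exact: iota_uniq.
Qed.

Lemma ls_inj n : injective (@ls n).
Proof.
move=> s t E; apply/permP => i; apply: ord_inj.
by rewrite -!nth_ls E.
Qed.

Lemma ls_surj n l : perm_eq l (iota 0 n) -> exists s : 'S_n, ls s = l.
Proof.
move=> Hp.
have Hsz : size l = n by rewrite (perm_size Hp) size_iota.
have Hlt : forall i : 'I_n, nth 0 l i < n.
  move=> i; have : nth 0 l i \in l by rewrite mem_nth // Hsz.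
  by rewrite (perm_mem Hp) mem_iota.
pose f := fun i : 'I_n => insubd i (nth 0 l i).
have Hf : forall i, val (f i) = nth 0 l i by move=> i; rewrite val_insubd Hlt.
have Hu : uniq l by rewrite (perm_uniq Hp) iota_uniq.
have finj : injective f.
  move=> i j /(congr1 val); rewrite !Hf => /eqP.
  by rewrite nth_uniq ?Hsz // => /eqP /val_inj.
exists (perm finj); apply: (@eq_from_nth _ 0); first by rewrite size_ls Hsz.
move=> i; rewrite size_ls => Hi.
by rewrite -[i]/(val (Ordinal Hi)) nth_ls permE Hf.
Qed.

Lemma card_count n (P : pred (seq nat)) :
  #|[set s : 'S_n | P (ls s)]| = count P (permutations (iota 0 n)).
Proof.
rewrite cardE -(size_map (@ls n)) -size_filter; apply: perm_size.
apply: uniq_perm.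
- by rewrite map_inj_uniq ?enum_uniq //; exact: ls_inj.
- by rewrite filter_uniq // permutations_uniq.
move=> l; rewrite mem_filter mem_permutations; apply/mapP/andP.
- by move=> [s]; rewrite mem_enum inE => Hs ->; split => //; exact: ls_perm.
- move=> [HP Hp]; have [s Es] := ls_surj Hp.
  by exists s => //; rewrite mem_enum inE Es.
Qed.

Lemma c321_ls n (s : 'S_n) : contains321 s = ~~ av (ls s).
Proof.
apply/idP/idP.
- move=> /existsP [i /existsP [j /existsP [k /and4P [a b c d]]]].
  apply/negP => Hav.
  have : av (ls s) = false.
    by apply: avP1; exists i, j, k; rewrite size_ls !nth_ls.
  by rewrite Hav.
- move=> Hn; have [i [j [k [a b c d e]]]] := avP2 (negbTE Hn).
  rewrite size_ls in c.
  have Hi : i < n by lia.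
  have Hj : j < n by lia.
  apply/existsP; exists (Ordinal Hi); apply/existsP; exists (Ordinal Hj).
  apply/existsP; exists (Ordinal c); apply/and4P; split => //=.
  + by rewrite -[j]/(val (Ordinal Hj)) -[i]/(val (Ordinal Hi)) !nth_ls in d.
  + by rewrite -[j]/(val (Ordinal Hj)) -[k]/(val (Ordinal c)) !nth_ls in e.
Qed.

Lemma ballot_iff m (s : 'S_m.+2) :
  ~~ contains321 s ->
  ballot s = ~~ (s (Ordinal (isT : 1 < m.+2)) < s (Ordinal (isT : 0 < m.+2))).
Proof.
set i1 := Ordinal _; set i0 := Ordinal _ => Hnc.
have Ei1 : forall k : 'I_m.+2, nat_of_ord k = 1 -> k = i1 by move=> k Hk; apply: ord_inj.
have Ei0 : forall k : 'I_m.+2, nat_of_ord k = 0 -> k = i0 by move=> k Hk; apply: ord_inj.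
apply/idP/idP.
- move=> /forallP H; apply/negP => Hd.
  have := H (inord 2 : 'I_m.+3); rewrite /ndes_prefix /nasc_prefix inordK //.
  set D := [set _ | _]; set A := [set _ | _].
  have -> : #|A| = 0.
    apply/eqP; rewrite cards_eq0; apply/eqP/setP => j; rewrite !inE.
    apply/negbTE/negP => /andP [Hj /existsP [k /andP [/eqP Hk Hlt]]].
    have Ej : j = i0 by apply: Ei0; lia.
    have Ek : k = i1 by apply: Ei1; rewrite Hk Ej.
    by move: Hlt Hd; rewrite Ej Ek; lia.
  rewrite leqn0 cards_eq0 => /eqP HD.
  have : i0 \in D by rewrite inE /=; apply/existsP; exists i1.
  by rewrite HD inE.
- move=> Hnd; apply/forallP => i.
  rewrite /ndes_prefix /nasc_prefix.
  set D := [set _ | _]; set A := [set _ | _].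
  pose f := fun j : 'I_m.+2 => Ordinal (leq_ltn_trans (leq_pred j) (ltn_ord j)).
  have Dpos : forall j, j \in D -> 0 < nat_of_ord j.
    move=> j; rewrite inE => /andP [_ /existsP [k /andP [/eqP Hk Hlt]]].
    rewrite lt0n; apply/negP => /eqP Hj0.
    have Ej : j = i0 by apply: Ei0.
    have Ek : k = i1 by apply: Ei1; rewrite Hk Hj0.
    by move: Hnd; rewrite -Ej -Ek Hlt.
  have injf : {in D &, injective f}.
    move=> j j' Hj Hj' /(congr1 (@nat_of_ord _)) /= E.
    apply: ord_inj; have := Dpos _ Hj; have := Dpos _ Hj'; lia.
  rewrite -(card_in_imset injf); apply: subset_leq_card.
  apply/subsetP => y /imsetP [j Hj ->].
  have Hj0 := Dpos _ Hj.
  move: Hj; rewrite !inE => /andP [Hji /existsP [k /andP [/eqP Hk Hlt]]].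
  apply/andP; split; first by rewrite /f /= prednK //; exact: ltnW.
  apply/existsP; exists j; rewrite /f /= prednK // eqxx /=.
  have Hne : f j != j by apply/eqP => /(congr1 (@nat_of_ord _)) /=; lia.
  case: (ltngtP (s (f j)) (s j)) => // [Hgt | Heq].
  + move/negP: Hnc; case; apply/existsP; exists (f j); apply/existsP; exists j.
    apply/existsP; exists k; rewrite Hgt Hlt /=; apply/andP; split; first by rewrite prednK.
    by have Hk2 : nat_of_ord k = j.+1 := Hk; rewrite Hk2 ltnSn.
  + by move: Hne; rewrite -(inj_eq (@perm_inj _ s)) (ord_inj Heq) eqxx.
Qed.

Definition desc01 (l : seq nat) : bool := nth 0 l 1 < nth 0 l 0.
Definition F (l : seq nat) : seq nat :=
  if l is x :: t then x.+1 :: 0 :: map succn t else [::].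

Lemma F_inj : injective F.
Proof.
move=> [|x t] [|y u] //= [-> /(inj_map succn_inj) ->] //.
Qed.

Lemma nib0 w : nib 0 w.
Proof. by elim: w => //= y w ->; rewrite andbT. Qed.

Lemma nib_shift x t : nib x.+1 (map succn t) = nib x t.
Proof.
elim: t => //= y t ->; rewrite ltnS all_map.
by under eq_all do rewrite /= ltnS.
Qed.

Lemma av_shift t : av (map succn t) = av t.
Proof. by elim: t => //= y t ->; rewrite nib_shift. Qed.

Lemma av_F x t : av (F (x :: t)) = av (x :: t).
Proof.
rewrite /= nib0 av_shift nib_shift.
have -> : all (leq 0) (map succn t) by apply/allP.
by [].
Qed.

Lemma perm_swap (a b : nat) w : perm_eql (a :: b :: w) (b :: a :: w).
Proof. exact: (perm_catCA [:: a] [:: b] w). Qed.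

Lemma perm_F x t k : perm_eq (F (x :: t)) (iota 0 k.+2) = perm_eq (x :: t) (iota 0 k.+1).
Proof.
rewrite -[F (x :: t)]/(x.+1 :: 0 :: map succn t) perm_swap.
rewrite -[iota 0 k.+2]/(0 :: iota 1 k.+1).
have -> : iota 1 k.+1 = map succn (iota 0 k.+1) by rewrite (iotaDl 1 0).
rewrite perm_cons -(map_cons succn).
apply/idP/idP; first exact: (perm_map_inj succn_inj).
exact: perm_map.
Qed.

Lemma count_split (T : Type) (a b : pred T) s :
  count a s = count (fun x => a x && ~~ b x) s + count (fun x => a x && b x) s.
Proof.
elim: s => //= x s ->; case: (a x); case: (b x) => /=; lia.
Qed.

Lemma count_desc m :
  count (fun l => av l && desc01 l) (permutations (iota 0 m.+2)) =
  count av (permutations (iota 0 m.+1)).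
Proof.
rewrite -!size_filter -[RHS](size_map F); apply: perm_size; apply: uniq_perm.
- by rewrite filter_uniq // permutations_uniq.
- by rewrite map_inj_uniq ?filter_uniq ?permutations_uniq //; exact: F_inj.
move=> l; rewrite mem_filter mem_permutations; apply/andP/mapP.
- move=> [/andP [Hav Hd] Hp].
  have Hsz : size l = m.+2 by rewrite (perm_size Hp) size_iota.
  have Hu : uniq l by rewrite (perm_uniq Hp) iota_uniq.
  have H0 : 0 \in l by rewrite (perm_mem Hp) mem_iota.
  case: l Hav Hd Hp Hsz Hu H0 => [|a [|b t]] //= Hav Hd Hp _ Hu H0.
  rewrite /desc01 /= in Hd.
  move: (Hav) => /andP [/andP [Hab _] _].
  have Hb0 : b = 0.
    move: Hab; rewrite leqNgt Hd /= => /allP Hall.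
    move: H0; rewrite !inE => /or3P [/eqP Ea | /eqP -> // | Ht].
    + by move: Hd; rewrite -Ea.
    + by have := Hall 0 Ht; rewrite leqn0 => /eqP.
  subst b.
  move: Hu => /andP [_ /andP [H0t _]].
  have Ht : map succn (map predn t) = t.
    rewrite -map_comp -[RHS]map_id; apply/eq_in_map => y Hy /=.
    by rewrite prednK // lt0n; apply/negP => /eqP Ey; move: H0t; rewrite -Ey Hy.
  have Ea : a.-1.+1 = a by rewrite prednK.
  exists (a.-1 :: map predn t); last by rewrite /= Ht Ea.
  rewrite mem_filter mem_permutations -av_F -perm_F.
  rewrite -[F _]/(a.-1.+1 :: 0 :: map succn (map predn t)) Ht Ea.
  by rewrite Hp andbT; exact: Hav.
- move=> [u]; rewrite mem_filter mem_permutations => /andP [Hav Hp] ->.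
  case: u Hav Hp => [|x t] Hav Hp; first by have := perm_size Hp; rewrite size_iota.
  by rewrite av_F Hav perm_F Hp.
Qed.

Lemma count_av_gen n : count av (permutations (iota 0 n)) = g n 0.
Proof.
rewrite -size_gen -size_filter; apply: perm_size; apply: uniq_perm.
- by rewrite filter_uniq // permutations_uniq.
- exact: uniq_gen.
by move=> l; rewrite mem_filter mem_permutations mem_gen andbC.
Qed.
Lemma B321_count m :
  #|B321 m.+2| = count (fun l => av l && ~~ desc01 l) (permutations (iota 0 m.+2)).
Proof.
rewrite -card_count; apply: eq_card => s; rewrite !inE.
rewrite c321_ls negbK.
case Hav: (av (ls s)); last by rewrite andbF.
rewrite andbT /= ballot_iff; last by rewrite c321_ls Hav.
by rewrite /desc01 -[1]/(nat_of_ord (Ordinal (isT : 1 < m.+2))) -[0]/(nat_of_ord (Ordinal (isT : 0 < m.+2))) !nth_ls.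
Qed.
Import GRing.Theory Num.Theory.
Lemma gR1 k : g k.+1 0 = g k 1.
Proof. by rewrite /= big_ord1. Qed.

Lemma gR2 k r : g k.+1 r.+1 = g k.+1 r + g k r.+2.
Proof.
rewrite /= big_ord_recr /= eqxx; congr (_ + _).
rewrite [RHS]big_ord_recr [LHS]big_ord_recl /= eqxx subn0 addnC; congr (_ + _).
apply: eq_bigr => i _ /=.
have -> : (i.+1 == r.+1) = false by apply/negbTE; rewrite eqSS neq_ltn ltn_ord.
have -> : (i == r :> nat) = false by apply/negbTE; rewrite neq_ltn ltn_ord.
by rewrite subSS.
Qed.

Local Open Scope ring_scope.

Lemma g_closed k r : (g k r)%:R = (r.+1)%:R / (k + r).+1%:R * ('C(k.*2 + r, k))%:R :> rat.
Proof.
elim: k r => [|k IH] r.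
  by rewrite /= bin0 add0n mulr1 divff // pnatr_eq0.
elim: r => [|r IHr].
  rewrite gR1 IH addn0.
  have Hb : 'C(k.+1.*2, k.+1) = (2 * 'C(k.*2.+1, k))%N.
    have Hs : 'C(k.*2.+1, k.+1) = 'C(k.*2.+1, k).
      rewrite -(bin_sub (n:=k.*2.+1) (m:=k)); last by lia.
      by congr 'C(_, _); lia.
    by rewrite doubleS binS Hs mul2n addnn.
  rewrite !addn0 Hb !addn1 natrM.
  have h1 := ler0n rat k.
  field; by rewrite !lt0r_neq0 //; lra.
rewrite gR2 natrD IHr IH.
set a := 'C(k.*2 + r.+2, k).
have Eb : 'C(k.+1.*2 + r, k.+1) = 'C(k.*2 + r.+2, k.+1).
  by congr 'C(_, _); lia.
have Ec : 'C(k.+1.*2 + r.+1, k.+1) = ('C(k.*2 + r.+2, k.+1) + a)%N.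
  by rewrite /a -binS; congr 'C(_, _); lia.
have Hab := mul_bin_left (k.*2 + r.+2) k.
rewrite (_ : (k.*2 + r.+2 - k = k + r.+2)%N) in Hab; last by lia.
rewrite Eb Ec natrD.
move: Hab; set b := 'C(k.*2 + r.+2, k.+1) => Hab.
have HabR : (k.+1)%:R * b%:R = (k + r.+2)%:R * a%:R :> rat by rewrite -!natrM Hab.
have Hk : (k.+1)%:R != 0 :> rat by rewrite pnatr_eq0.
have -> : b%:R = (k + r.+2)%:R * a%:R / (k.+1)%:R :> rat by rewrite -HabR mulrC mulKf.
have h1 := ler0n rat k; have h2 := ler0n rat r.
field; by rewrite !lt0r_neq0 //; lra.
Qed.


Lemma g_catalan n : (g n 0)%:R = catalan n.
Proof. by rewrite g_closed /catalan !addn0 mulrC mul1r. Qed.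

Lemma catalan_diff m :
  catalan m.+2 - catalan m.+1 = 3%:R / (m.+3)%:R * ('C((m.+2.*2).-2, m.+2.-2))%:R.
Proof.
rewrite /catalan /=.
set a := 'C(m.*2.+2, m).
have Hb := mul_bin_left (m.*2.+2) m.
rewrite (_ : (m.*2.+2 - m = m.+2)%N) in Hb; last by lia.
have E4 : 'C(m.+2.*2, m.+2) = (2 * ('C(m.*2.+2, m.+1) + a))%N.
  rewrite doubleS binS.
  have -> : 'C(m.+1.*2.+1, m.+2) = 'C(m.*2.+2, m.+2) + 'C(m.*2.+2, m.+1) by rewrite doubleS binS.
  have -> : 'C(m.+1.*2.+1, m.+1) = 'C(m.*2.+2, m.+1) + a by rewrite doubleS binS.
  have -> : 'C(m.*2.+2, m.+2) = a.
    rewrite /a -(bin_sub (n:=m.*2.+2) (m:=m)); last by lia.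
    by congr 'C(_, _); lia.
  lia.
rewrite E4 doubleS natrM natrD.
move: Hb; set b := 'C(m.*2.+2, m.+1) => Hb.
have HbR : (m.+1)%:R * b%:R = (m.+2)%:R * a%:R :> rat by rewrite -!natrM Hb.
have Hk : (m.+1)%:R != 0 :> rat by rewrite pnatr_eq0.
have -> : b%:R = (m.+2)%:R * a%:R / (m.+1)%:R :> rat by rewrite -HbR mulrC mulKf.
have h1 := ler0n rat m.
field; by rewrite !lt0r_neq0 //; lra.
Qed.

Unset Implicit Arguments.

Theorem theorem4p1 (n : nat) (hn : (2 <= n)%N) :
  (#|B321 n|%:R : rat) = catalan n - catalan n.-1 /\
  catalan n - catalan n.-1 = 3%:R / (n.+1)%:R * ('C((n.*2).-2, n.-2))%:R.
Proof.
case: n hn => [|[|m]] // _.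
split; last exact: catalan_diff.
have E := count_split av desc01 (permutations (iota 0 m.+2)).
rewrite count_desc !count_av_gen -B321_count in E.
by rewrite -!g_catalan E natrD addrK.
Qed.
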